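(* Let $f\in C^1[0,1]$ with $f(0)=0$, $h:=f'$, $q$ satisfying (q), assume $\lim_{\varphi\to0^+}q(\varphi)/\varphi$ exists in $[0,\infty)$, $\int_0^\delta q(\sigma)/\sigma^2\,d\sigma<+\infty$ for some $\delta\in(0,1)$, and $c^*>h(0)$. Then for every $c>c^*$, $\beta(c)=\hat\beta(c)$.
   Context: Condition (q): $q\in C[0,1]$, $q>0$ on $(0,1)$, $q(0)=q(1)=0$, and $\limsup_{\varphi\to0^+}q(\varphi)/\varphi<+\infty$. For $c\in\mathbb R$, a solution of problem $(P_c)$ is a function $z\in C[0,1]\cap C^1(0,1)$ with $\dot z(\varphi)=h(\varphi)-c-q(\varphi)/z(\varphi)$ and $z(\varphi)<0$ for all $\varphi\in(0,1)$, and $z(0)=0$. $c^*$ denotes the real number such that $(P_c)$ has a solution with $z(1)=0$ iff $c\ge c^*$ (unique); $z^*$ is this solution for $c=c^*$. For $c>c^*$, $\beta(c)<0$ is the number such that, for $b<0$, $(P_c)$ has a solution with $z(1)=b$ iff $b\ge\beta(c)$. For $c>c^*$ and $\varphi_0\in(0,1)$, $\hat z_{\varphi_0}$ is the unique function in $C[0,1]\cap C^1(0,1)$ solving $\dot z=h-c-q/z$, $z<0$ on $(0,1)$, with $\hat z_{\varphi_0}(\varphi_0)=z^*(\varphi_0)$; these are increasing in $\varphi_0$, and $\hat z:=\lim_{\varphi_0\to0^+}\hat z_{\varphi_0}$ (a solution of $(P_c)$); $\hat\beta(c):=\hat z(1)$. *)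

(* Defs.v *)
From Stdlib Require Import Reals.
From Coquelicot Require Import Coquelicot.
Open Scope R_scope.

Definition I01 (x : R) : Prop := 0 <= x <= 1.
Definition J01 (x : R) : Prop := 0 < x < 1.

Definition cont01 (g : R -> R) : Prop :=
  forall x, I01 x -> filterlim g (within I01 (locally x)) (locally (g x)).

(* f ∈ C^1[0,1] with derivative h = f' (one-sided derivatives at 0 and 1,
   h continuous on [0,1]) *)
Definition C1_with_deriv (f h : R -> R) : Prop :=
  cont01 h /\
  forall x, I01 x ->
    filterlim (fun y => (f y - f x) / (y - x))
      (within (fun y => I01 y /\ y <> x) (locally x)) (locally (h x)).

Definition cond_q (q : R -> R) : Prop :=
  cont01 q /\ (forall x, J01 x -> 0 < q x) /\ q 0 = 0 /\ q 1 = 0 /\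
  (* limsup_{phi -> 0+} q(phi)/phi < +oo *)
  exists M : R, (at_right 0) (fun p => q p / p <= M).

Definition solves_ode (h q : R -> R) (c : R) (z : R -> R) : Prop :=
  cont01 z /\
  (forall x, J01 x -> is_derive z x (h x - c - q x / z x)) /\
  (forall x, J01 x -> z x < 0).

Definition solves_Pc (h q : R -> R) (c : R) (z : R -> R) : Prop :=
  solves_ode h q c z /\ z 0 = 0.

(* Main.v *)
Require Import Defs.
From Stdlib Require Import Reals Lra Classical.
From Coquelicot Require Import Coquelicot.
Open Scope R_scope.

Definition cw (A : R -> R) (x0 : R) : Prop :=
  forall e, 0 < e -> exists d, 0 < d /\ forall y, I01 y -> Rabs (y - x0) < d -> Rabs (A y - A x0) < e.

Lemma cont01_cw g x : cont01 g -> I01 x -> cw g x.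
Proof.
  intros Hg Hx e He.
  specialize (Hg x Hx (ball (g x) (mkposreal e He)) (locally_ball _ _)).
  destruct Hg as [d Hd]. exists d. split. apply cond_pos.
  intros y Hy Hyx. apply (Hd y Hyx Hy).
Qed.

Lemma cw_const k x0 : cw (fun _ => k) x0.
Proof. intros e He. exists 1. split. lra. intros. rewrite Rminus_diag, Rabs_R0. lra. Qed.

Lemma cw_plus A B x0 : cw A x0 -> cw B x0 -> cw (fun y => A y + B y) x0.
Proof.
  intros HA HB e He.
  destruct (HA (e/2)) as [d1 [Hd1 H1]]; [lra|].
  destruct (HB (e/2)) as [d2 [Hd2 H2]]; [lra|].
  exists (Rmin d1 d2). split. apply Rmin_glb_lt; lra.
  intros y Hy Hyx.
  assert (Rabs (y - x0) < d1) by (eapply Rlt_le_trans; [exact Hyx| apply Rmin_l]).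
  assert (Rabs (y - x0) < d2) by (eapply Rlt_le_trans; [exact Hyx| apply Rmin_r]).
  specialize (H1 y Hy H). specialize (H2 y Hy H0).
  replace (A y + B y - (A x0 + B x0)) with ((A y - A x0) + (B y - B x0)) by ring.
  eapply Rle_lt_trans. apply Rabs_triang. lra.
Qed.

Lemma cw_opp A x0 : cw A x0 -> cw (fun y => - A y) x0.
Proof.
  intros HA e He. destruct (HA e He) as [d [Hd H]]. exists d. split; auto.
  intros y Hy Hyx. replace (- A y - - A x0) with (- (A y - A x0)) by ring.
  rewrite Rabs_Ropp. auto.
Qed.

Lemma cw_lin M x0 : cw (fun y => M * y) x0.
Proof.
  intros e He. exists (e / (Rabs M + 1)). split.
  apply Rdiv_lt_0_compat; auto. pose proof (Rabs_pos M); lra.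
  intros y Hy Hyx. replace (M * y - M * x0) with (M * (y - x0)) by ring.
  rewrite Rabs_mult.
  assert (0 < Rabs M + 1) by (pose proof (Rabs_pos M); lra).
  apply Rle_lt_trans with ((Rabs M + 1) * Rabs (y - x0)).
  apply Rmult_le_compat_r. apply Rabs_pos. lra.
  apply Rmult_lt_reg_l with (/ (Rabs M + 1)). apply Rinv_0_lt_compat; auto.
  rewrite <- Rmult_assoc, Rinv_l by lra. rewrite Rmult_1_l.
  unfold Rdiv in Hyx. lra.
Qed.

Lemma le_at A B x0 : cw A x0 -> cw B x0 ->
  (forall e, 0 < e -> exists y, I01 y /\ Rabs (y - x0) < e /\ A y <= B y) -> A x0 <= B x0.
Proof.
  intros HA HB Hp. destruct (Rle_or_lt (A x0) (B x0)) as [H|H]; auto.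
  set (e := (A x0 - B x0)/2).
  destruct (HA e) as [d1 [Hd1 H1]]; [unfold e; lra|].
  destruct (HB e) as [d2 [Hd2 H2]]; [unfold e; lra|].
  destruct (Hp (Rmin d1 d2)) as [y [Hy [Hyx Hle]]]. apply Rmin_glb_lt; lra.
  assert (Rabs (y - x0) < d1) by (eapply Rlt_le_trans; [exact Hyx| apply Rmin_l]).
  assert (Rabs (y - x0) < d2) by (eapply Rlt_le_trans; [exact Hyx| apply Rmin_r]).
  specialize (H1 y Hy H0). specialize (H2 y Hy H3).
  apply Rabs_def2 in H1. apply Rabs_def2 in H2. unfold e in *. lra.
Qed.

Lemma cont01_int g x : cont01 g -> J01 x ->
  forall e, 0 < e -> exists d, 0 < d /\ forall y, Rabs (y - x) < d -> Rabs (g y - g x) < e.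
Proof.
  intros Hg Hx e He. destruct (cont01_cw g x Hg ltac:(red in Hx |- *; lra) e He) as [d [Hd H]].
  red in Hx. exists (Rmin d (Rmin x (1 - x))). split.
  repeat apply Rmin_glb_lt; lra.
  intros y Hy. apply H.
  assert (Rabs (y - x) < Rmin x (1-x)) by (eapply Rlt_le_trans; [exact Hy| apply Rmin_r]).
  assert (Rmin x (1-x) <= x) by apply Rmin_l. assert (Rmin x (1-x) <= 1 - x) by apply Rmin_r.
  apply Rabs_def2 in H0. red. lra.
  eapply Rlt_le_trans; [exact Hy| apply Rmin_l].
Qed.

Lemma eps_cont g x : (forall e, 0 < e -> exists d, 0 < d /\ forall y, Rabs (y - x) < d -> Rabs (g y - g x) < e) ->
  continuous g x.
Proof.
  intros H. apply filterlim_locally. intros eps.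
  destruct (H eps (cond_pos eps)) as [d [Hd Hd']]. exists (mkposreal d Hd).
  intros y Hy. apply Hd'. exact Hy.
Qed.

Lemma cont_eps g x : continuous g x ->
  forall e, 0 < e -> exists d, 0 < d /\ forall y, Rabs (y - x) < d -> Rabs (g y - g x) < e.
Proof.
  intros H e He. apply filterlim_locally with (eps := mkposreal e He) in H.
  destruct H as [d Hd]. exists d. split. apply cond_pos. intros y Hy. apply (Hd y Hy).
Qed.

Lemma derive_cont (g : R -> R) (x l : R) : is_derive g x l ->
  forall e, 0 < e -> exists d, 0 < d /\ forall y, Rabs (y - x) < d -> Rabs (g y - g x) < e.
Proof.
  intros H. apply (cont_eps g x). apply (@ex_derive_continuous R_AbsRing R_NormedModule). exists l. exact H.
Qed.

Lemma derive_neg_local (g : R -> R) (r d : R) : is_derive g r d -> d < 0 ->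
  exists eps, 0 < eps /\ (forall x, r < x < r + eps -> g x < g r) /\
                         (forall x, r - eps < x < r -> g r < g x).
Proof.
  intros H Hd. apply is_derive_Reals in H.
  destruct (H (- d / 2)) as [del Hdel]; [lra|].
  exists del. split. apply cond_pos. split.
  - intros x Hx. specialize (Hdel (x - r) ltac:(lra)).
    replace (r + (x - r)) with x in Hdel by ring.
    assert (Rabs (x - r) < del) by (rewrite Rabs_right; lra).
    specialize (Hdel H0). apply Rabs_def2 in Hdel.
    set (Q := (g x - g r) / (x - r)) in *.
    assert (g x - g r = Q * (x - r)) by (unfold Q; field; lra).
    assert (Q < 0) by lra. nra.
  - intros x Hx. specialize (Hdel (x - r) ltac:(lra)).
    replace (r + (x - r)) with x in Hdel by ring.
    assert (Rabs (x - r) < del) by (rewrite Rabs_left; lra).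
    specialize (Hdel H0). apply Rabs_def2 in Hdel.
    set (Q := (g x - g r) / (x - r)) in *.
    assert (g x - g r = Q * (x - r)) by (unfold Q; field; lra).
    assert (Q < 0) by lra. nra.
Qed.

Lemma is_derive_eq (f : R -> R) x l l' : is_derive f x l -> l = l' -> is_derive f x l'.
Proof. intros H E; subst; exact H. Qed.

Lemma sign_forward (g dg : R -> R) t s : t < s -> g t <= 0 ->
  (forall r, t <= r <= s -> is_derive g r (dg r)) ->
  (forall r, t <= r <= s -> g r = 0 -> dg r < 0) -> g s < 0.
Proof.
  intros Hts Hgt Hd Hz.
  assert (Ht1: exists t1, t < t1 <= s /\ forall x, t < x <= t1 -> g x < 0).
  { destruct (Req_dec (g t) 0) as [E|E].
    - destruct (derive_neg_local g t (dg t) (Hd t ltac:(lra)) (Hz t ltac:(lra) E)) as [eps [Heps [Hr _]]].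
      exists (Rmin s (t + eps/2)). split. split. apply Rmin_glb_lt; lra. apply Rmin_l.
      intros x Hx. rewrite <- E. apply Hr. assert (Rmin s (t+eps/2) <= t + eps/2) by apply Rmin_r. lra.
    - destruct (derive_cont g t (dg t) (Hd t ltac:(lra)) (- g t) ltac:(lra)) as [d [Hd0 Hc]].
      exists (Rmin s (t + d/2)). split. split. apply Rmin_glb_lt; lra. apply Rmin_l.
      intros x Hx. assert (Rmin s (t+d/2) <= t + d/2) by apply Rmin_r.
      specialize (Hc x ltac:(rewrite Rabs_right; lra)). apply Rabs_def2 in Hc. lra. }
  destruct Ht1 as [t1 [Ht1 Hneg1]].
  set (E := fun r => t1 <= r <= s /\ forall x, t < x <= r -> g x < 0).
  assert (Hb : bound E). { exists s. intros r [Hr _]. lra. }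
  assert (He : exists r, E r). { exists t1. split. lra. exact Hneg1. }
  destruct (completeness E Hb He) as [m [Hub Hlub]].
  assert (Hm1 : t1 <= m). { apply Hub. split. lra. exact Hneg1. }
  assert (Hm2 : m <= s). { apply Hlub. intros r [Hr _]. lra. }
  assert (Hleft : forall x, t < x < m -> g x < 0).
  { intros x Hx. destruct (classic (exists r, E r /\ x < r)) as [[r [[_ Hr] Hxr]]|Hn].
    apply Hr. lra.
    exfalso. assert (m <= x). apply Hlub. intros r Hr. destruct (Rle_or_lt r x); auto.
    exfalso; apply Hn; exists r; auto. lra. }
  assert (Hgm : g m < 0).
  { destruct (Rlt_or_le (g m) 0) as [H|H]; auto. exfalso.
    destruct (Req_dec (g m) 0) as [E0|E0].
    - destruct (derive_neg_local g m (dg m) (Hd m ltac:(lra)) (Hz m ltac:(lra) E0)) as [eps [Heps [_ Hl]]].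
      set (x := Rmax ((t+m)/2) (m - eps/2)).
      assert ((t+m)/2 <= x) by apply Rmax_l. assert (m - eps/2 <= x) by apply Rmax_r.
      assert (x < m). { unfold x. apply Rmax_lub_lt; lra. }
      specialize (Hl x ltac:(lra)). specialize (Hleft x ltac:(lra)). lra.
    - destruct (derive_cont g m (dg m) (Hd m ltac:(lra)) (g m) ltac:(lra)) as [d [Hd0 Hc]].
      set (x := Rmax ((t+m)/2) (m - d/2)).
      assert ((t+m)/2 <= x) by apply Rmax_l. assert (m - d/2 <= x) by apply Rmax_r.
      assert (x < m). { unfold x. apply Rmax_lub_lt; lra. }
      specialize (Hc x ltac:(rewrite Rabs_left; lra)). apply Rabs_def2 in Hc.
      specialize (Hleft x ltac:(lra)). lra. }
  destruct (Req_dec m s) as [Ems|Ems]. rewrite <- Ems; exact Hgm.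
  exfalso.
  destruct (derive_cont g m (dg m) (Hd m ltac:(lra)) (- g m) ltac:(lra)) as [d [Hd0 Hc]].
  set (r' := Rmin s (m + d/2)).
  assert (Hr1 : r' <= s) by apply Rmin_l. assert (Hr2 : r' <= m + d/2) by apply Rmin_r.
  assert (Hr3 : m < r'). { unfold r'. apply Rmin_glb_lt; lra. }
  assert (HE : E r').
  { split. lra. intros x Hx. destruct (Rlt_or_le x m) as [Hx1|Hx1]. apply Hleft; lra.
    destruct (Req_dec x m) as [Hx2|Hx2]. subst x; auto.
    specialize (Hc x ltac:(rewrite Rabs_right; lra)). apply Rabs_def2 in Hc. lra. }
  specialize (Hub r' HE). lra.
Qed.

Lemma nonincr (g dg : R -> R) a b : a <= b ->
  (forall x, a <= x <= b -> is_derive g x (dg x)) ->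
  (forall x, a <= x <= b -> dg x <= 0) -> g b <= g a.
Proof.
  intros Hab Hd Hs.
  assert (H := MVT_gen g a b dg). cbv zeta in H.
  rewrite Rmin_left in H by lra. rewrite Rmax_right in H by lra.
  destruct H as [c [Hc E]].
  intros x Hx; apply Hd; lra.
  intros x Hx. apply continuity_pt_filterlim.
  apply (@ex_derive_continuous R_AbsRing R_NormedModule). exists (dg x). apply Hd; lra.
  specialize (Hs c Hc). nra.
Qed.

Lemma gron (W P D dD : R -> R) a b : a <= b ->
  (forall x, a <= x <= b -> is_derive W x (P x * W x)) ->
  (forall x, a <= x <= b -> is_derive D x (dD x)) ->
  (forall x, a <= x <= b -> 0 <= W x) ->
  (forall x, a <= x <= b -> P x <= dD x) ->
  W b <= W a * exp (D b - D a).
Proof.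
  intros Hab HW HD Hpos Hle.
  assert (Hn := nonincr (fun x => W x * exp (- D x)) (fun x => W x * exp (- D x) * (P x - dD x)) a b Hab).
  assert (W b * exp (- D b) <= W a * exp (- D a)).
  { apply Hn.
    - intros x Hx.
      pose proof (is_derive_comp exp (fun x => - D x) x (exp (- D x)) (- dD x) (is_derive_exp _) (is_derive_opp _ _ _ (HD x Hx))) as H3.
      pose proof (is_derive_mult _ _ _ _ _ (HW x Hx) H3 Rmult_comm) as H4.
      eapply is_derive_eq. exact H4. unfold plus, mult, scal; simpl. unfold mult; simpl. ring.
    - intros x Hx. specialize (Hpos x Hx). specialize (Hle x Hx).
      pose proof (exp_pos (- D x)).
      assert (0 <= W x * exp (- D x)) by (apply Rmult_le_pos; lra). nra. }
  replace (D b - D a) with (- D a + D b) by ring. rewrite exp_plus.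
  assert (E : W b = W b * exp (- D b) * exp (D b)).
  { rewrite Rmult_assoc, <- exp_plus. replace (- D b + D b) with 0 by ring. rewrite exp_0. ring. }
  rewrite E. rewrite <- Rmult_assoc. apply Rmult_le_compat_r. left; apply exp_pos. exact H.
Qed.

Lemma bounded01 g : cont01 g -> exists Q, forall x, I01 x -> g x <= Q.
Proof.
  intros Hg.
  set (cl := fun x => Rmax 0 (Rmin x 1)).
  assert (Hcl : forall x, I01 (cl x)).
  { intros x. unfold cl, I01. split. apply Rmax_l. apply Rmax_lub. lra. apply Rmin_r. }
  assert (Hclid : forall x, I01 x -> cl x = x).
  { intros x [Hx0 Hx1]. unfold cl. rewrite Rmin_left by lra. rewrite Rmax_right by lra. auto. }
  assert (Hlip : forall x y, I01 x -> Rabs (cl y - x) <= Rabs (y - x)).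
  { intros x y [Hx0 Hx1]. unfold cl, Rmax, Rmin.
    destruct (Rle_dec y 1); destruct (Rle_dec 0 _); unfold Rabs;
    repeat destruct Rcase_abs; lra. }
  destruct (continuity_ab_maj (fun x => g (cl x)) 0 1 ltac:(lra)) as [Mx [HM _]].
  { intros c Hc. apply continuity_pt_filterlim. apply (eps_cont (fun x => g (cl x)) c).
    intros e He. destruct (cont01_cw g c Hg Hc e He) as [d [Hd H]].
    exists d. split; auto. intros y Hy. cbv beta. rewrite (Hclid c Hc). apply H. apply Hcl.
    eapply Rle_lt_trans. apply Hlip; auto. auto. }
  exists (g (cl Mx)). intros x Hx. pose proof (HM x Hx) as HH. cbv beta in HH.
  rewrite (Hclid x Hx) in HH. exact HH.
Qed.

Definition fq (q : R -> R) := fun s : R => q s / s ^ 2.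

Lemma fq_cont q s : cont01 q -> J01 s -> continuous (fq q) s.
Proof.
  intros Hq Hs. apply continuity_pt_filterlim.
  apply (continuity_pt_div q (fun s => s ^ 2)).
  - apply continuity_pt_filterlim. apply (eps_cont q s). apply cont01_int; auto.
  - apply continuity_pt_filterlim. apply (@ex_derive_continuous R_AbsRing R_NormedModule (fun s => s ^ 2)).
    auto_derive. auto.
  - red in Hs. apply pow_nonzero. lra.
Qed.

Lemma fq_exint q a b : cont01 q -> 0 < a < 1 -> 0 < b < 1 -> ex_RInt (fq q) a b.
Proof.
  intros Hq Ha Hb. apply (@ex_RInt_continuous R_CompleteNormedModule). intros z Hz. apply fq_cont; auto.
  red. destruct (Rle_dec a b).
  rewrite Rmin_left, Rmax_right in Hz by lra. lra.
  rewrite Rmin_right, Rmax_left in Hz by lra. lra.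
Qed.

Lemma fq_deriv q d s : cont01 q -> 0 < d < 1 -> 0 < s < 1 ->
  is_derive (fun b => RInt (fq q) d b) s (fq q s).
Proof.
  intros Hq Hd Hs. apply (@is_derive_RInt R_CompleteNormedModule (fq q) (fun b => RInt (fq q) d b) d s).
  - assert (Hr : 0 < Rmin s (1 - s) / 2) by (apply Rdiv_lt_0_compat; [apply Rmin_glb_lt; lra| lra]).
    exists (mkposreal _ Hr). intros b Hb. apply RInt_correct. apply fq_exint; auto.
    change (Rabs (b - s) < Rmin s (1 - s) / 2) in Hb. apply Rabs_def2 in Hb.
    assert (Rmin s (1-s) <= s) by apply Rmin_l. assert (Rmin s (1-s) <= 1 - s) by apply Rmin_r. lra.
  - apply fq_cont; [exact Hq | exact Hs].
Qed.

Lemma fq_bound q d l : cont01 q -> (forall x, J01 x -> 0 < q x) -> 0 < d < 1 ->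
  is_RInt_gen (fq q) (at_right 0) (at_point d) l ->
  forall t, 0 < t < d -> RInt (fq q) t d <= l + 1.
Proof.
  intros Hq Hqp Hd Hl t Ht.
  unfold is_RInt_gen, filterlimi, filter_le, filtermapi in Hl.
  specialize (Hl (ball l (mkposreal 1 Rlt_0_1)) (locally_ball _ _)).
  destruct Hl as [Q R HQ HR HQR].
  destruct HQ as [eps Heps]. simpl in HR.
  set (a := Rmin t eps / 2).
  assert (Ha0 : 0 < a). { unfold a. apply Rdiv_lt_0_compat. apply Rmin_glb_lt; try lra. apply cond_pos. lra. }
  assert (Ha1 : a < t). { unfold a. assert (Rmin t eps <= t) by apply Rmin_l. lra. }
  assert (Ha2 : a < eps). { unfold a. assert (Rmin t eps <= eps) by apply Rmin_r. pose proof (cond_pos eps). lra. }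
  assert (HQa : Q a). { apply Heps. change (Rabs (a - 0) < eps). rewrite Rminus_0_r, Rabs_right; lra. lra. }
  destruct (HQR a d HQa HR) as [y [Hy Hyl]]. simpl in Hy, Hyl.
  change (Rabs (y - l) < 1) in Hyl. apply Rabs_def2 in Hyl.
  apply (@is_RInt_unique R_CompleteNormedModule) in Hy.
  assert (Hch := RInt_Chasles (fq q) a t d (fq_exint q a t Hq ltac:(lra) ltac:(lra)) (fq_exint q t d Hq ltac:(lra) ltac:(lra))).
  assert (Hpos : 0 <= RInt (fq q) a t).
  { apply RInt_ge_0. lra. apply fq_exint; auto; lra. intros x Hx. unfold fq.
    apply Rlt_le, Rdiv_lt_0_compat. apply Hqp. red; lra. apply pow_lt. lra. }
  change (plus (RInt (fq q) a t) (RInt (fq q) t d)) with (RInt (fq q) a t + RInt (fq q) t d) in Hch.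
  lra.
Qed.

Lemma inv_cmp y zs Q : y <= zs -> zs < 0 -> 0 <= Q -> Q / zs <= Q / y.
Proof.
  intros H1 H2 H3. unfold Rdiv.
  apply Rmult_le_compat_l; auto.
  assert (0 < - zs) by lra. assert (- zs <= - y) by lra.
  pose proof (Rinv_le_contravar _ _ H H0).
  rewrite !Rinv_opp in H4. lra.
Qed.

Lemma inv_cmp_strict y zs Q : y < zs -> zs < 0 -> 0 < Q -> Q / zs < Q / y.
Proof.
  intros H1 H2 H3. unfold Rdiv.
  apply Rmult_lt_compat_l; auto.
  assert (0 < - zs) by lra. assert (- zs < - y) by lra.
  assert (0 < - y) by lra.
  pose proof (Rinv_lt_contravar _ _ (Rmult_lt_0_compat (- zs) (- y) H H4) H0) as H5.
  rewrite !Rinv_opp in H5. lra.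
Qed.

Lemma sol_deriv h q c y x : solves_ode h q c y -> 0 < x < 1 -> is_derive y x (h x - c - q x / y x).
Proof. intros [_ [Hd _]] Hx. apply Hd. exact Hx. Qed.

Lemma sol_neg h q c y x : solves_ode h q c y -> 0 < x < 1 -> y x < 0.
Proof. intros [_ [_ Hn]] Hx. apply Hn. exact Hx. Qed.

Lemma sol_cw h q c y x : solves_ode h q c y -> I01 x -> cw y x.
Proof. intros [Hc _] Hx. apply cont01_cw; auto. Qed.

Lemma deriv_diff (y z : R -> R) x dy dz : is_derive y x dy -> is_derive z x dz ->
  is_derive (fun r => y r - z r) x (dy - dz).
Proof.
  intros H1 H2. pose proof (is_derive_minus _ _ _ _ _ H1 H2) as H.
  eapply is_derive_eq. exact H. unfold minus, plus, opp; simpl. ring.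
Qed.


Lemma cmp_left (h q : R -> R) c cs y zs phi0 : solves_ode h q c y -> solves_ode h q cs zs -> cs < c ->
  0 < phi0 < 1 -> y phi0 = zs phi0 -> forall t, 0 < t < phi0 -> zs t <= y t.
Proof.
  intros Hy Hz Hc Hp E t Ht.
  destruct (Rle_or_lt (zs t) (y t)) as [H|H]; auto. exfalso.
  assert (Hs := sign_forward (fun r => y r - zs r)
     (fun r => (h r - c - q r / y r) - (h r - cs - q r / zs r)) t phi0 ltac:(lra) ltac:(lra)).
  assert (y phi0 - zs phi0 < 0).
  { apply Hs.
    - intros r Hr. apply deriv_diff; [apply (sol_deriv h q c)|apply (sol_deriv h q cs)]; auto; lra.
    - intros r Hr E0. assert (y r = zs r) by lra. rewrite H0. lra. }
  lra.
Qed.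

Lemma cmp_right (h q : R -> R) (Hqp : forall x, J01 x -> 0 < q x) c cs y zs phi0 : solves_ode h q c y -> solves_ode h q cs zs -> cs < c ->
  0 < phi0 < 1 -> y phi0 = zs phi0 -> forall s, phi0 < s < 1 ->
  y s <= zs s - (c - cs) / 2 * (s - phi0).
Proof.
  intros Hy Hz Hc Hp E s Hs.
  assert (Hsf := sign_forward (fun r => y r - zs r + (c - cs) / 2 * (r - phi0))
     (fun r => (h r - c - q r / y r) - (h r - cs - q r / zs r) + (c - cs) / 2) phi0 s ltac:(lra)
     ltac:(cbv beta; rewrite E; lra)).
  cut (y s - zs s + (c - cs) / 2 * (s - phi0) < 0). lra.
  apply Hsf.
  - intros r Hr.
    assert (H1 := deriv_diff y zs r _ _ (sol_deriv h q c y r Hy ltac:(lra)) (sol_deriv h q cs zs r Hz ltac:(lra))).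
    assert (H2 : is_derive (fun r => (c - cs) / 2 * (r - phi0)) r ((c - cs) / 2)).
    { auto_derive. auto. ring. }
    pose proof (is_derive_plus _ _ _ _ _ H1 H2) as H3.
    eapply is_derive_eq. exact H3. unfold plus; simpl. ring.
  - intros r Hr E0.
    assert (Hyz : y r <= zs r) by nra.
    assert (Hzn : zs r < 0) by (apply (sol_neg h q cs); auto; lra).
    assert (q r / zs r <= q r / y r) by (apply inv_cmp; auto; apply Rlt_le, Hqp; red; lra).
    lra.
Qed.

Lemma le0_at1 (h q : R -> R) c y : solves_ode h q c y -> y 1 <= 0.
Proof.
  intros Hy. apply (le_at y (fun _ => 0) 1). apply (sol_cw h q c); [exact Hy| red; lra]. apply cw_const.
  intros e He. exists (1 - Rmin e 1 / 2).
  assert (0 < Rmin e 1) by (apply Rmin_glb_lt; lra). assert (Rmin e 1 <= e) by apply Rmin_l.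
  assert (Rmin e 1 <= 1) by apply Rmin_r.
  split. red; lra. split. rewrite Rabs_left; lra.
  apply Rlt_le. apply (sol_neg h q c); auto; lra.
Qed.

Lemma le0_at0 (h q : R -> R) c y : solves_ode h q c y -> y 0 <= 0.
Proof.
  intros Hy. apply (le_at y (fun _ => 0) 0). apply (sol_cw h q c); [exact Hy| red; lra]. apply cw_const.
  intros e He. exists (Rmin e 1 / 2).
  assert (0 < Rmin e 1) by (apply Rmin_glb_lt; lra). assert (Rmin e 1 <= e) by apply Rmin_l.
  assert (Rmin e 1 <= 1) by apply Rmin_r.
  split. red; lra. split. rewrite Rminus_0_r, Rabs_right; lra.
  apply Rlt_le. apply (sol_neg h q c); auto; lra.
Qed.

Lemma zero_at0 (h q : R -> R) c cs y zs phi0 : solves_ode h q c y -> solves_Pc h q cs zs -> cs < c ->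
  0 < phi0 < 1 -> y phi0 = zs phi0 -> y 0 = 0.
Proof.
  intros Hy [Hz Hz0] Hc Hp E. apply Rle_antisym. apply (le0_at0 h q c); auto.
  cut (zs 0 <= y 0). lra. apply (le_at zs y 0). apply (sol_cw h q cs); auto; red; lra.
  apply (sol_cw h q c); auto; red; lra.
  intros e He. exists (Rmin e phi0 / 2).
  assert (0 < Rmin e phi0) by (apply Rmin_glb_lt; lra). assert (Rmin e phi0 <= e) by apply Rmin_l.
  assert (Rmin e phi0 <= phi0) by apply Rmin_r.
  split. red; lra. split. rewrite Rminus_0_r, Rabs_right; lra.
  apply (cmp_left h q c cs y zs phi0); auto. lra.
Qed.

Lemma order_same (h q : R -> R) (Hqp : forall x, J01 x -> 0 < q x) c y z : solves_ode h q c y -> solves_ode h q c z -> z 1 <= y 1 ->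
  forall t, 0 < t < 1 -> z t <= y t.
Proof.
  intros Hy Hz H1 t Ht. destruct (Rle_or_lt (z t) (y t)) as [H|H]; auto. exfalso.
  set (k := (y t - z t) / 2).
  assert (Hk : forall s, t < s < 1 -> y s - z s - k < 0).
  { intros s Hs.
    apply (sign_forward (fun r => y r - z r - k) (fun r => (h r - c - q r / y r) - (h r - c - q r / z r)) t s).
    lra. unfold k; lra.
    - intros r Hr.
      assert (H2 := deriv_diff y z r _ _ (sol_deriv h q c y r Hy ltac:(lra)) (sol_deriv h q c z r Hz ltac:(lra))).
      assert (H3 := deriv_diff _ (fun _ => k) r _ _ H2 (is_derive_const k r)).
      eapply is_derive_eq. exact H3. simpl. unfold zero; simpl. ring.
    - intros r Hr E0.
      assert (y r < z r) by (unfold k in E0; lra).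
      assert (Hzn : z r < 0) by (apply (sol_neg h q c); auto; lra).
      assert (q r / z r < q r / y r) by (apply inv_cmp_strict; auto; apply Hqp; red; lra).
      lra. }
  assert (y 1 - z 1 <= k).
  { apply (le_at (fun r => y r - z r) (fun _ => k) 1).
    apply cw_plus. apply (sol_cw h q c); auto; red; lra. apply cw_opp. apply (sol_cw h q c); auto; red; lra.
    apply cw_const.
    intros e He. set (r := Rmax ((t + 1) / 2) (1 - e / 2)). exists r.
    assert ((t+1)/2 <= r) by apply Rmax_l. assert (1 - e/2 <= r) by apply Rmax_r.
    assert (r < 1) by (unfold r; apply Rmax_lub_lt; lra).
    split. red; lra. split. rewrite Rabs_left; lra.
    specialize (Hk r ltac:(lra)). lra. }
  unfold k in H0. lra.
Qed.


Lemma exp_le a b : a <= b -> exp a <= exp b.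
Proof. intros H. destruct H. left; apply exp_increasing; auto. subst; lra. Qed.

Lemma div_le Q m p : 0 <= Q -> 0 < m -> m <= p -> Q / p <= Q / m.
Proof.
  intros H1 H2 H3. unfold Rdiv. apply Rmult_le_compat_l; auto.
  apply Rinv_le_contravar; auto.
Qed.

Lemma lin_lower h q c z : cont01 h -> (forall x, J01 x -> 0 < q x) -> solves_Pc h q c z ->
  exists rho M, 0 < rho <= 1 /\ 0 < M /\ forall s, 0 < s < rho -> - z s <= M * s.
Proof.
  intros Hh Hqp [Hz Hz0].
  destruct (cont01_cw h 0 Hh ltac:(red; lra) 1 ltac:(lra)) as [d [Hd Hhd]].
  set (M := Rabs (c - h 0) + 1).
  assert (HM : 0 < M) by (unfold M; pose proof (Rabs_pos (c - h 0)); lra).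
  exists (Rmin d 1), M. split. split. apply Rmin_glb_lt; lra. apply Rmin_r. split; auto.
  intros s Hs.
  assert (Hs1 : Rmin d 1 <= d) by apply Rmin_l. assert (Hs2 : Rmin d 1 <= 1) by apply Rmin_r.
  assert (0 <= z s + M * s).
  { assert (E : 0 = z 0 + M * 0) by (rewrite Hz0; ring). rewrite E.
    apply (le_at (fun y => z y + M * y) (fun _ => z s + M * s) 0).
    apply cw_plus. apply (sol_cw h q c); [exact Hz | red; lra]. apply cw_lin. apply cw_const.
    intros e He. set (y := Rmin e s / 2). exists y.
    assert (0 < Rmin e s) by (apply Rmin_glb_lt; lra). assert (Rmin e s <= e) by apply Rmin_l.
    assert (Rmin e s <= s) by apply Rmin_r.
    split. red; unfold y; lra. split. unfold y; rewrite Rminus_0_r, Rabs_right; lra.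
    assert (Hn := nonincr (fun r => - M * r - z r) (fun r => - M - (h r - c - q r / z r)) y s
       ltac:(unfold y; lra)).
    cut ((fun r => - M * r - z r) s <= (fun r => - M * r - z r) y). cbv beta. lra.
    apply Hn.
    - intros r Hr. apply deriv_diff. auto_derive. auto. ring. apply (sol_deriv h q c); auto. unfold y in Hr; lra.
    - intros r Hr. assert (0 < r < 1) by (unfold y in Hr; lra).
      specialize (Hhd r ltac:(red; lra) ltac:(rewrite Rminus_0_r, Rabs_right; lra)).
      apply Rabs_def2 in Hhd.
      assert (z r < 0) by (apply (sol_neg h q c); auto).
      assert (0 < q r) by (apply Hqp; auto).
      assert (0 < - (q r / z r)). { rewrite <- Rdiv_opp_r. apply Rdiv_lt_0_compat; lra. }
      assert (c - h 0 <= Rabs (c - h 0)) by apply Rle_abs.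
      unfold M in *. lra. }
  lra.
Qed.

Theorem proposition8p3
  (f h q : R -> R)
  (Hf : C1_with_deriv f h) (Hf0 : f 0 = 0)
  (Hq : cond_q q)
  (Hqlim : exists L : R, 0 <= L /\ filterlim (fun p => q p / p) (at_right 0) (locally L))
  (Hint : exists delta : R, 0 < delta < 1 /\
            ex_RInt_gen (fun s => q s / s ^ 2) (at_right 0) (at_point delta))
  (cstar : R)
  (Hcstar : forall c : R, (exists z, solves_Pc h q c z /\ z 1 = 0) <-> cstar <= c)
  (zstar : R -> R) (Hzstar : solves_Pc h q cstar zstar /\ zstar 1 = 0)
  (Hch : h 0 < cstar)
  (c : R) (Hc : cstar < c)
  (beta : R) (Hbeta_neg : beta < 0)
  (Hbeta : forall b : R, b < 0 -> ((exists z, solves_Pc h q c z /\ z 1 = b) <-> beta <= b))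
  (zhat : R -> R -> R)
  (Hzhat : forall phi0 : R, 0 < phi0 < 1 ->
             solves_ode h q c (zhat phi0) /\ zhat phi0 phi0 = zstar phi0)
  (betahat : R)
  (Hbetahat : filterlim (fun phi0 => zhat phi0 1) (at_right 0) (locally betahat)) :
  beta = betahat.
Proof.
  destruct Hq as [Hqc [Hqp [Hq0 [Hq1 _]]]].
  destruct Hf as [Hhc _].
  destruct Hint as [d [Hd [l Hl]]].
  change (is_RInt_gen (fq q) (at_right 0) (at_point d) l) in Hl.
  destruct (proj2 (Hbeta beta Hbeta_neg) (Rle_refl _)) as [z [Hz Hz1]].
  destruct Hzstar as [Hzs Hzs1].
  set (ka := c - cstar).
  assert (Hka : 0 < ka) by (unfold ka; lra).
  destruct (lin_lower h q c z Hhc Hqp Hz) as [rho [M [Hrho [HM0 HM]]]].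
  destruct (bounded01 q Hqc) as [Qb HQb].
  assert (HQb0 : 0 <= Qb). { pose proof (HQb (1/2) ltac:(red; lra)). pose proof (Hqp (1/2) ltac:(red; lra)). lra. }
  set (K := 16 / (ka * ka)).
  set (B := Qb / ((ka * d / 4) * (ka * d / 4))).
  assert (HK : 0 < K) by (unfold K; apply Rdiv_lt_0_compat; nra).
  set (C := 2 * M * exp (K * (l + 1)) * exp B).
  assert (HC : 0 < C) by (unfold C; pose proof (exp_pos (K * (l+1))); pose proof (exp_pos B);
     repeat apply Rmult_lt_0_compat; lra).
  assert (Key : forall phi0, 0 < phi0 < Rmin (d / 2) (rho / 2) ->
     0 <= zhat phi0 1 - beta <= C * phi0).
  { intros phi0 Hp.
    assert (Hp1 : Rmin (d/2) (rho/2) <= d/2) by apply Rmin_l.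
    assert (Hp2 : Rmin (d/2) (rho/2) <= rho/2) by apply Rmin_r.
    assert (Hp01 : 0 < phi0 < 1) by lra.
    destruct (Hzhat phi0 Hp01) as [Hy E].
    set (y := zhat phi0) in *.
    destruct Hz as [Hzo Hz0].
    assert (Hy0 : y 0 = 0) by (apply (zero_at0 h q c cstar y zstar phi0); auto).
    assert (Hyb : beta <= y 1).
    { pose proof (le0_at1 h q c y Hy). destruct (Rlt_or_le (y 1) 0).
      apply (Hbeta (y 1)); auto. exists y. split; auto. split; auto. lra. }
    assert (Hord : forall t, 0 < t < 1 -> z t <= y t).
    { apply (order_same h q Hqp c); auto. lra. }
    assert (Hright : forall s, phi0 < s < 1 -> y s <= - (ka / 2) * (s - phi0)).
    { intros s Hs. pose proof (cmp_right h q Hqp c cstar y zstar phi0 Hy (proj1 Hzs) Hc Hp01 E s Hs).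
      pose proof (sol_neg h q cstar zstar s (proj1 Hzs) ltac:(lra)). unfold ka. lra. }
    set (W := fun r => y r - z r).
    set (P := fun r => q r / (y r * z r)).
    assert (HW : forall r, 0 < r < 1 -> is_derive W r (P r * W r)).
    { intros r Hr. eapply is_derive_eq. apply deriv_diff; apply (sol_deriv h q c); auto.
      unfold P, W. assert (y r < 0) by (apply (sol_neg h q c); auto).
      assert (z r < 0) by (apply (sol_neg h q c); auto).
      assert (EE : h r - c - q r / y r - (h r - c - q r / z r) = q r / (y r * z r) * (y r - z r))
        by (field; split; lra).
      exact EE. }
    assert (HWpos : forall r, 0 < r < 1 -> 0 <= W r) by (intros r Hr; unfold W; pose proof (Hord r Hr); lra).
    assert (Hyz : forall r, phi0 < r < 1 -> (ka / 2 * (r - phi0)) * (ka / 2 * (r - phi0)) <= y r * z r).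
    { intros r Hr. pose proof (Hright r Hr). pose proof (Hord r ltac:(lra)).
      assert (0 <= ka / 2 * (r - phi0)) by (apply Rmult_le_pos; lra). nra. }
    assert (S1 : W d <= W (2 * phi0) * exp (K * (l + 1))).
    { assert (G := gron W P (fun r => K * RInt (fq q) d r) (fun r => K * fq q r) (2 * phi0) d
                ltac:(lra)).
      assert (W d <= W (2 * phi0) * exp (K * RInt (fq q) d d - K * RInt (fq q) d (2 * phi0))).
      { apply G.
        - intros x Hx. apply HW. lra.
        - intros x Hx. apply is_derive_scal. apply fq_deriv; auto; lra.
        - intros x Hx. apply HWpos. lra.
        - intros x Hx. unfold P, fq, K.
          pose proof (Hyz x ltac:(lra)).
          assert (0 < q x) by (apply Hqp; red; lra).
          replace (16 / (ka * ka) * (q x / x ^ 2)) with (q x / ((ka * x / 4) * (ka * x / 4))) by (field; split; lra).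
          apply div_le. lra. assert (0 < ka * x / 4) by (apply Rmult_lt_0_compat; [nra|lra]). nra.
          assert (ka * x / 4 <= ka / 2 * (x - phi0)) by nra.
          assert (0 <= ka * x / 4) by nra. nra. }
      rewrite RInt_point in H. change (@zero R_AbsRing) with 0 in H.
      assert (RInt (fq q) (2 * phi0) d <= l + 1) by (apply (fq_bound q d l); auto; lra).
      assert (Eo := opp_RInt_swap (fq q) d (2 * phi0) (fq_exint q d (2*phi0) Hqc ltac:(lra) ltac:(lra))).
      change (opp (RInt (fq q) d (2 * phi0))) with (- RInt (fq q) d (2 * phi0)) in Eo.
      eapply Rle_trans. exact H. apply Rmult_le_compat_l. apply HWpos; lra.
      apply exp_le. rewrite <- Eo in H0. unfold zero; simpl. nra. }
    assert (S2 : forall x, d < x < 1 -> W x <= W d * exp B).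
    { intros x Hx.
      assert (G := gron W P (fun r => B * r) (fun _ => B) d x ltac:(lra)).
      assert (W x <= W d * exp (B * x - B * d)).
      { apply G.
        - intros r Hr. apply HW. lra.
        - intros r Hr. auto_derive. auto. ring.
        - intros r Hr. apply HWpos. lra.
        - intros r Hr. unfold P, B.
          pose proof (Hyz r ltac:(lra)).
          assert (0 < q r) by (apply Hqp; red; lra).
          assert (q r <= Qb) by (apply HQb; red; lra).
          assert (0 < ka * d / 4) by (apply Rmult_lt_0_compat; [nra|lra]).
          apply Rle_trans with (q r / ((ka * d / 4) * (ka * d / 4))).
          apply div_le. lra. nra.
          assert (ka * d / 4 <= ka / 2 * (r - phi0)) by nra. nra.
          unfold Rdiv. apply Rmult_le_compat_r. left; apply Rinv_0_lt_compat; nra. lra. }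
      eapply Rle_trans. exact H. apply Rmult_le_compat_l. apply HWpos; lra.
      apply exp_le. assert (0 < ka*d/4) by (unfold Rdiv; apply Rmult_lt_0_compat; [apply Rmult_lt_0_compat; lra | lra]). assert (0 <= B) by (unfold B; apply Rdiv_le_0_compat; [exact HQb0 | apply Rmult_lt_0_compat; lra]). cbv beta. clear -H1 Hx Hd. nra. }
    assert (S3 : W 1 <= W d * exp B).
    { apply (le_at W (fun _ => W d * exp B) 1).
      apply cw_plus. apply (sol_cw h q c); [exact Hy| red; lra]. apply cw_opp. apply (sol_cw h q c); [exact Hzo| red; lra].
      apply cw_const.
      intros e He. set (r := Rmax ((d + 1) / 2) (1 - e / 2)). exists r.
      assert ((d+1)/2 <= r) by apply Rmax_l. assert (1 - e/2 <= r) by apply Rmax_r.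
      assert (r < 1) by (unfold r; apply Rmax_lub_lt; lra).
      split. red; lra. split. rewrite Rabs_left; lra.
      apply S2. lra. }
    assert (S4 : W (2 * phi0) <= M * (2 * phi0)).
    { unfold W. pose proof (HM (2 * phi0) ltac:(lra)).
      pose proof (sol_neg h q c y (2 * phi0) Hy ltac:(lra)). lra. }
    assert (EW1 : W 1 = y 1 - beta) by (unfold W; rewrite Hz1; ring).
    split. lra.
    pose proof (exp_pos (K * (l + 1))). pose proof (exp_pos B).
    assert (0 <= W (2 * phi0)) by (apply HWpos; lra).
    assert (W d <= M * (2 * phi0) * exp (K * (l + 1))).
    { eapply Rle_trans. exact S1. apply Rmult_le_compat_r; lra. }
    unfold C.
    rewrite <- EW1. apply Rle_trans with (W d * exp B). exact S3.
    replace (2 * M * exp (K * (l + 1)) * exp B * phi0) with ((M * (2 * phi0) * exp (K * (l + 1))) * exp B) by ring.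
    apply Rmult_le_compat_r; lra. }
  destruct (Req_dec beta betahat) as [Eq|Ne]; auto. exfalso.
  set (e := Rabs (beta - betahat) / 2).
  assert (He : 0 < e) by (unfold e; apply Rdiv_lt_0_compat; [apply Rabs_pos_lt; lra| lra]).
  apply filterlim_locally with (eps := mkposreal e He) in Hbetahat.
  destruct Hbetahat as [eps Heps].
  set (p := Rmin (Rmin eps (Rmin (d / 2) (rho / 2))) (e / C) / 2).
  assert (Hm1 : Rmin (Rmin eps (Rmin (d / 2) (rho / 2))) (e / C) <= Rmin eps (Rmin (d / 2) (rho / 2))) by apply Rmin_l.
  assert (Hm2 : Rmin (Rmin eps (Rmin (d / 2) (rho / 2))) (e / C) <= e / C) by apply Rmin_r.
  assert (Hm3 : Rmin eps (Rmin (d / 2) (rho / 2)) <= eps) by apply Rmin_l.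
  assert (Hm4 : Rmin eps (Rmin (d / 2) (rho / 2)) <= Rmin (d / 2) (rho / 2)) by apply Rmin_r.
  assert (Hpos : 0 < Rmin (Rmin eps (Rmin (d / 2) (rho / 2))) (e / C)).
  { repeat apply Rmin_glb_lt. apply cond_pos. lra. lra. apply Rdiv_lt_0_compat; auto. }
  assert (Hp0 : 0 < p) by (unfold p; lra).
  assert (Hpe : C * p < e).
  { assert (p < e / C) by (unfold p; lra).
    apply Rmult_lt_compat_l with (r := C) in H; auto.
    replace (C * (e / C)) with e in H by (field; lra). lra. }
  assert (Hb1 : Rabs (zhat p 1 - betahat) < e).
  { apply (Heps p). change (Rabs (p - 0) < eps). rewrite Rminus_0_r, Rabs_right; unfold p in *; lra. exact Hp0. }
  destruct (Key p ltac:(unfold p in *; lra)) as [K1 K2].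
  apply Rabs_def2 in Hb1.
  assert (Rabs (beta - betahat) < 2 * e).
  { apply Rabs_def1; lra. }
  unfold e in H. lra.
Qed.
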